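(* Let $n\in\mathbb N$, $\varphi_1\in C_0^{[n/2]+2}(\mathbb R^n)$, and $\psi(x,t)=\frac32\int_0^1 v_{\varphi_1}(x,3t^{1/3}s)(1-s^2)\,ds$ for $x\in\mathbb R^n$, $t>0$. Then \[ \psi_{tt}-t^{-4/3}\Delta\psi+2t^{-1}\psi_t=0\quad(t>0,\ x\in\mathbb R^n),\qquad \lim_{t\to0}t\psi(x,t)=0,\quad \lim_{t\to0}\big(t\psi_t(x,t)+\psi(x,t)\big)=\varphi_1(x). \]
   Context: $\Delta=\sum_{i=1}^n\partial_{x_i}^2$, $[n/2]$ is the integer part of $n/2$. For $\varphi=\varphi(x)$, $v_\varphi(x,r)$ denotes the solution $v$ of the free wave equation $v_{rr}-\Delta v=0$, $v(x,0)=\varphi(x)$, $v_r(x,0)=0$, evaluated at time $r$. *)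

(* Defs.v *)
From Stdlib Require Import Reals.
From Stdlib Require Fin.
Open Scope R_scope.

Definition Rn (n : nat) := Fin.t n -> R.

Definition setc {n : nat} (x : Rn n) (i : Fin.t n) (s : R) : Rn n :=
  fun j => if Fin.eq_dec i j then s else x j.

Fixpoint fsum (n : nat) : (Fin.t n -> R) -> R :=
  match n with
  | O => fun _ => 0
  | S m => fun f => f (@Fin.F1 m) + fsum m (fun i => f (Fin.FS i))
  end.

Definition cont_Rn {n : nat} (f : Rn n -> R) : Prop :=
  forall x eps, 0 < eps -> exists delta, 0 < delta /\
    forall y, (forall j, Rabs (y j - x j) < delta) -> Rabs (f y - f x) < eps.

Fixpoint Ck {n : nat} (k : nat) (f : Rn n -> R) : Prop :=
  cont_Rn f /\
  match k with
  | O => True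
  | S k' => forall i, exists g : Rn n -> R,
      (forall x, derivable_pt_lim (fun s => f (setc x i s)) (x i) (g x)) /\ Ck k' g
  end.

Definition has_compact_support {n : nat} (f : Rn n -> R) : Prop :=
  exists M, forall x, f x <> 0 -> forall j, Rabs (x j) <= M.

Definition C0k {n : nat} (k : nat) (f : Rn n -> R) : Prop :=
  Ck k f /\ has_compact_support f.

Definition jcont {n : nat} (F : Rn n -> R -> R) : Prop :=
  forall x r eps, 0 < eps -> exists delta, 0 < delta /\
    forall y q, (forall j, Rabs (y j - x j) < delta) -> Rabs (q - r) < delta ->
      Rabs (F y q - F x r) < eps.

Fixpoint CkT {n : nat} (k : nat) (F : Rn n -> R -> R) : Prop :=
  jcont F /\
  match k with
  | O => True
  | S k' =>
      (exists G : Rn n -> R -> R,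
         (forall x r, derivable_pt_lim (fun q => F x q) r (G x r)) /\ CkT k' G) /\
      (forall i, exists G : Rn n -> R -> R,
         (forall x r, derivable_pt_lim (fun s => F (setc x i s) r) (x i) (G x r))
         /\ CkT k' G)
  end.

Definition is_wave_solution {n : nat} (phi : Rn n -> R) (v : Rn n -> R -> R) : Prop :=
  CkT 2 v /\
  (forall x, v x 0 = phi x) /\
  exists (vr vrr : Rn n -> R -> R) (d1 d2 : Fin.t n -> Rn n -> R -> R),
    (forall x r,
       derivable_pt_lim (fun q => v x q) r (vr x r) /\
       derivable_pt_lim (fun q => vr x q) r (vrr x r) /\
       (forall i,
          derivable_pt_lim (fun s => v (setc x i s) r) (x i) (d1 i x r) /\
          derivable_pt_lim (fun s => d1 i (setc x i s) r) (x i) (d2 i x r)) /\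
       vrr x r - fsum n (fun i => d2 i x r) = 0) /\
    (forall x, vr x 0 = 0).

(* Main.v *)
Require Import Defs.
From Stdlib Require Import Reals Lra Lia Psatz Classical ClassicalEpsilon FunctionalExtensionality.
From Stdlib Require Fin.
Open Scope R_scope.

Definition RI (f : R -> R) : R :=
  match excluded_middle_informative (exists pr : Riemann_integrable f 0 1, True) with
  | left H => RiemannInt (proj1_sig (constructive_indefinite_description _ H))
  | right _ => 0 end.

Lemma RI_pr f (pr : Riemann_integrable f 0 1) : RI f = RiemannInt pr.
Proof.
  unfold RI. destruct excluded_middle_informative as [H|H].
  - apply RiemannInt_P5.
  - exfalso; apply H; exists pr; trivial.
Qed.

Lemma int_cont f : continuity f -> Riemann_integrable f 0 1.
Proof. intro H. apply continuity_implies_RiemannInt; [lra|]. intros; apply H. Qed.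

Lemma RI_lin f g l (p1 : Riemann_integrable f 0 1) (p2 : Riemann_integrable g 0 1) :
  RI (fun x => f x + l * g x) = RI f + l * RI g.
Proof.
  rewrite (RI_pr _ (RiemannInt_P10 l p1 p2)), (RI_pr _ p1), (RI_pr _ p2).
  apply RiemannInt_P13.
Qed.

Lemma RI_ext f g (p : Riemann_integrable f 0 1) :
  (forall x, 0 <= x <= 1 -> f x = g x) -> RI f = RI g.
Proof.
  intro H.
  assert (pg : Riemann_integrable g 0 1).
  { refine (@Riemann_integrable_ext f g 0 1 _ p). intros x Hx; apply H.
    rewrite Rmin_left, Rmax_right in Hx; lra. }
  rewrite (RI_pr _ p), (RI_pr _ pg). apply RiemannInt_P18; [lra|].
  intros; apply H; lra.
Qed.

Lemma RI_bound f M (p : Riemann_integrable f 0 1) :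
  (forall x, 0 <= x <= 1 -> Rabs (f x) <= M) -> Rabs (RI f) <= M.
Proof.
  intro H. rewrite (RI_pr _ p).
  pose proof (RiemannInt_P16 p) as pa.
  eapply Rle_trans. apply (RiemannInt_P17 p pa); lra.
  assert (H0 : 0 <= 1) by lra.
  pose proof (@RiemannInt_const_bound _ 0 1 0 M pa H0) as Hb.
  assert (forall x, 0 < x < 1 -> 0 <= Rabs (f x) <= M).
  { intros; split; [apply Rabs_pos| apply H; lra]. }
  specialize (Hb H1). lra.
Qed.

Lemma RI_const c : RI (fun _ => c) = c.
Proof.
  change (RI (fct_cte c) = c). rewrite (RI_pr _ (RiemannInt_P14 0 1 c)). rewrite RiemannInt_P15. ring.
Qed.

Lemma RI_FTC f f' : (forall x, derivable_pt_lim f x (f' x)) -> continuity f' ->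
  RI f' = f 1 - f 0.
Proof.
  intros Hd Hc.
  set (d0 := (fun x => exist _ (f' x) (Hd x)) : derivable f).
  assert (Hc' : continuity (derive f d0)) by exact Hc.
  set (F := @mkC1 f d0 Hc').
  change (RI (derive F (diff0 F)) = F 1 - F 0).
  rewrite (RI_pr _ (RiemannInt_P32 F 0 1)). rewrite RiemannInt_P33; [reflexivity|lra].
Qed.

Lemma int_lin f g l : Riemann_integrable f 0 1 -> Riemann_integrable g 0 1 ->
  Riemann_integrable (fun x => f x + l * g x) 0 1.
Proof. intros; apply RiemannInt_P10; auto. Qed.

Lemma int_ext f g : (forall x, 0 <= x <= 1 -> f x = g x) -> Riemann_integrable f 0 1 -> Riemann_integrable g 0 1.
Proof. intros H p. refine (@Riemann_integrable_ext f g 0 1 _ p). intros x Hx; apply H.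
    rewrite Rmin_left, Rmax_right in Hx; lra. Qed.

Lemma int_minus f g : Riemann_integrable f 0 1 -> Riemann_integrable g 0 1 ->
  Riemann_integrable (fun x => f x - g x) 0 1.
Proof. intros p1 p2. apply (int_ext (fun x => f x + (-1) * g x)); [intros; ring|]. apply int_lin; auto. Qed.

Lemma int_scal f l : Riemann_integrable f 0 1 -> Riemann_integrable (fun x => l * f x) 0 1.
Proof. intros p1. apply (int_ext (fun x => 0 + l * f x)); [intros; ring|]. apply int_lin; auto. apply RiemannInt_P14. Qed.

Lemma RI_minus f g : Riemann_integrable f 0 1 -> Riemann_integrable g 0 1 ->
  RI (fun x => f x - g x) = RI f - RI g.
Proof. intros p1 p2. rewrite <- (RI_ext (fun x => f x + (-1) * g x)). rewrite RI_lin; auto; ring.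
  apply int_lin; auto. intros; ring. Qed.

Lemma RI_scal f l : Riemann_integrable f 0 1 -> RI (fun x => l * f x) = l * RI f.
Proof. intros p1. rewrite <- (RI_ext (fun x => (fun _ => 0) x + l * f x)).
  rewrite RI_lin; auto. rewrite RI_const; ring. apply RiemannInt_P14.
  apply int_lin; auto. apply RiemannInt_P14. intros; simpl; ring. Qed.

Definition jc2 (G : R -> R -> R) p s := forall eps, 0 < eps -> exists d, 0 < d /\
  forall q u, Rabs (q - p) < d -> Rabs (u - s) < d -> Rabs (G q u - G p s) < eps.

Lemma unif G p : (forall s, 0 <= s <= 1 -> jc2 G p s) -> forall eps, 0 < eps ->
  exists d, 0 < d /\ forall q s, Rabs (q - p) < d -> 0 <= s <= 1 -> Rabs (G q s - G p s) < eps.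
Proof.
  intros HG eps Heps.
  assert (loc : forall m, 0 <= m <= 1 -> exists dm, 0 < dm /\ forall q u, Rabs (q - p) < dm -> Rabs (u - m) < dm -> Rabs (G q u - G p u) < eps).
  { intros m Hm. destruct (HG m Hm (eps/2)) as [dm [Hdm H]]; [lra|].
    exists dm; split; auto. intros q u Hq Hu.
    pose proof (H q u Hq Hu). assert (Rabs (p - p) < dm) by (rewrite Rminus_diag, Rabs_R0; lra).
    pose proof (H p u H1 Hu).
    replace (G q u - G p u) with ((G q u - G p m) - (G p u - G p m)) by ring.
    eapply Rle_lt_trans. apply Rabs_triang. rewrite Rabs_Ropp. lra. }
  set (E := fun b => 0 <= b <= 1 /\ exists d, 0 < d /\ forall q s, Rabs (q - p) < d -> 0 <= s <= b -> Rabs (G q s - G p s) < eps).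
  assert (E0 : E 0).
  { destruct (loc 0) as [d0 [Hd0 H0]]; [lra|]. split; [lra|]. exists d0; split; auto.
    intros q s Hq Hs. apply H0; auto. replace (s - 0) with 0 by lra. rewrite Rabs_R0; lra. }
  destruct (completeness E) as [m [Hub Hlub]].
  { exists 1. intros b Hb; apply Hb. }
  { exists 0; auto. }
  assert (Hm : 0 <= m <= 1).
  { split. apply Hub; auto. apply Hlub. intros b Hb; apply Hb. }
  destruct (loc m Hm) as [dm [Hdm Hl]].
  assert (Hb : exists b, E b /\ m - dm < b).
  { apply NNPP; intro Hn. assert (is_upper_bound E (m - dm)).
    { intros b Hb. destruct (Rle_dec b (m - dm)); auto. exfalso; apply Hn; exists b; split; auto; lra. }
    apply Hlub in H. lra. }
  destruct Hb as [b [[Hb1 [db [Hdb Hb]]] Hbm]].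
  set (c := Rmin 1 (m + dm/2)).
  assert (Ec : E c).
  { split. unfold c; split. apply Rmin_glb; lra. apply Rmin_l.
    exists (Rmin db dm). split. apply Rmin_glb_lt; auto.
    intros q s Hq Hs. pose proof (Rmin_l db dm). pose proof (Rmin_r db dm).
    destruct (Rle_dec s b).
    - apply Hb; lra.
    - apply Hl. lra. pose proof (Rmin_r 1 (m + dm/2)). fold c in H1.
      apply Rabs_def1; lra. }
  assert (m = 1).
  { destruct (Rle_dec 1 m); [lra|]. exfalso. pose proof (Hub c Ec). unfold c in H.
    destruct (Rle_dec 1 (m + dm/2)).
    rewrite Rmin_left in H; lra. rewrite Rmin_right in H; lra. }
  subst m. assert (c = 1). { unfold c; apply Rmin_left; lra. }
  rewrite H in Ec. destruct Ec as [_ [d [Hd Hc]]]. exists d; split; auto.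
Qed.

Lemma DUI F G p r : 0 < r ->
  (forall q s, Rabs (q - p) < r -> 0 <= s <= 1 -> derivable_pt_lim (fun q => F q s) q (G q s)) ->
  (forall q, Rabs (q - p) < r -> continuity (F q)) ->
  continuity (G p) ->
  (forall s, 0 <= s <= 1 -> jc2 G p s) ->
  derivable_pt_lim (fun q => RI (F q)) p (RI (G p)).
Proof.
  intros Hr Hd HF HG Hj eps Heps.
  destruct (unif G p Hj (eps/2)) as [d [Hd0 Hu]]; [lra|].
  assert (Hdel : 0 < Rmin d r) by (apply Rmin_glb_lt; auto).
  exists (mkposreal _ Hdel). simpl. intros h Hh0 Hh.
  pose proof (Rmin_l d r). pose proof (Rmin_r d r).
  assert (HFp : Rabs (p - p) < r) by (rewrite Rminus_diag, Rabs_R0; lra).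
  assert (HFh : Rabs (p + h - p) < r) by (replace (p + h - p) with h by ring; lra).
  pose proof (int_cont _ (HF _ HFp)) as ip.
  pose proof (int_cont _ (HF _ HFh)) as ih.
  pose proof (int_cont _ HG) as ig.
  rewrite <- RI_minus by auto.
  replace ((RI (fun x => F (p + h) x - F p x)) / h) with (RI (fun x => /h * (F (p + h) x - F p x)))
    by (rewrite RI_scal; [unfold Rdiv; ring| apply int_minus; auto]).
  rewrite <- RI_minus by (try apply int_scal; try apply int_minus; auto).
  apply Rle_lt_trans with (eps/2); [|lra].
  apply RI_bound. apply int_minus; auto. apply int_scal; apply int_minus; auto.
  intros s Hs.
  assert (Hc : exists c, Rabs (c - p) < Rabs h /\ F (p + h) s - F p s = G c s * h).
  { destruct (Rle_dec 0 h).
    - assert (0 < h) by (destruct r0; auto; exfalso; auto).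
      destruct (MVT_cor2 (fun q => F q s) (fun q => G q s) p (p + h)) as [c [Hc1 Hc2]]; [lra| |].
      { intros c Hc; apply Hd; auto. apply Rabs_def1; rewrite Rabs_right in Hh; lra. }
      exists c. split. rewrite Rabs_right by lra. rewrite Rabs_right; lra.
      rewrite Hc1; ring.
    - destruct (MVT_cor2 (fun q => F q s) (fun q => G q s) (p + h) p) as [c [Hc1 Hc2]]; [lra| |].
      { intros c Hc; apply Hd; auto. apply Rabs_def1; rewrite Rabs_left in Hh; lra. }
      exists c. split. rewrite Rabs_left by lra. rewrite Rabs_left; lra.
      replace (F (p + h) s - F p s) with (- (F p s - F (p + h) s)) by ring.
      rewrite Hc1; ring. }
  destruct Hc as [c [Hc1 Hc2]]. rewrite Hc2.
  replace (/ h * (G c s * h) - G p s) with (G c s - G p s) by (field; auto).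
  left. apply Hu; auto. lra.
Qed.

Lemma jc2_cont G p : (forall s, jc2 G p s) -> continuity (G p).
Proof.
  intros H s eps Heps. destruct (H s eps Heps) as [d [Hd Hx]].
  exists d; split; auto. intros u [_ Hu]. simpl in *. unfold R_dist in *.
  apply Hx; auto. rewrite Rminus_diag, Rabs_R0; auto.
Qed.

Lemma jc2_fst g p s : continuity_pt g p -> jc2 (fun q _ => g q) p s.
Proof.
  intros H eps Heps. destruct (H eps Heps) as [d [Hd Hx]].
  exists d; split; auto. intros q u Hq Hu.
  destruct (Req_dec q p). subst; rewrite Rminus_diag, Rabs_R0; auto.
  apply (Hx q). split; auto. unfold D_x, no_cond; split; auto.
Qed.

Lemma jc2_snd g p s : continuity_pt g s -> jc2 (fun _ u => g u) p s.
Proof.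
  intros H eps Heps. destruct (H eps Heps) as [d [Hd Hx]].
  exists d; split; auto. intros q u Hq Hu.
  destruct (Req_dec u s). subst; rewrite Rminus_diag, Rabs_R0; auto.
  apply (Hx u). split; auto. unfold D_x, no_cond; split; auto.
Qed.

Lemma jc2_comp g A p s : continuity_pt g (A p s) -> jc2 A p s -> jc2 (fun q u => g (A q u)) p s.
Proof.
  intros Hg HA eps Heps. destruct (Hg eps Heps) as [d1 [Hd1 H1]].
  destruct (HA d1 Hd1) as [d2 [Hd2 H2]].
  exists d2; split; auto. intros q u Hq Hu.
  destruct (Req_dec (A q u) (A p s)). rewrite H, Rminus_diag, Rabs_R0; auto.
  apply (H1 (A q u)). split. unfold D_x, no_cond; split; auto. apply H2; auto.
Qed.

Lemma jc2_plus A B p s : jc2 A p s -> jc2 B p s -> jc2 (fun q u => A q u + B q u) p s.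
Proof.
  intros HA HB eps Heps. destruct (HA (eps/2)) as [d1 [Hd1 H1]]; [lra|].
  destruct (HB (eps/2)) as [d2 [Hd2 H2]]; [lra|].
  exists (Rmin d1 d2); split. apply Rmin_glb_lt; auto.
  intros q u Hq Hu. pose proof (Rmin_l d1 d2); pose proof (Rmin_r d1 d2).
  replace (A q u + B q u - (A p s + B p s)) with ((A q u - A p s) + (B q u - B p s)) by ring.
  eapply Rle_lt_trans. apply Rabs_triang.
  pose proof (H1 q u ltac:(lra) ltac:(lra)). pose proof (H2 q u ltac:(lra) ltac:(lra)). lra.
Qed.

Lemma mult_est a b a0 b0 e : 0 < e -> Rabs (a - a0) < Rmin 1 (e / (Rabs a0 + Rabs b0 + 1)) ->
  Rabs (b - b0) < Rmin 1 (e / (Rabs a0 + Rabs b0 + 1)) -> Rabs (a * b - a0 * b0) < e.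
Proof.
  intros He Ha Hb. set (k := Rabs a0 + Rabs b0 + 1) in *.
  assert (Hk : 0 < k) by (unfold k; pose proof (Rabs_pos a0); pose proof (Rabs_pos b0); lra).
  set (m := Rmin 1 (e / k)) in *.
  assert (m <= 1) by apply Rmin_l. assert (m <= e / k) by apply Rmin_r.
  assert (m * k <= e). { apply (Rmult_le_compat_r k) in H0; [|lra]. unfold Rdiv in H0.
    rewrite Rmult_assoc, Rinv_l in H0; lra. }
  replace (a * b - a0 * b0) with ((a - a0) * (b - b0) + (a - a0) * b0 + a0 * (b - b0)) by ring.
  eapply Rle_lt_trans. apply Rabs_triang. eapply Rle_lt_trans. apply Rplus_le_compat_r. apply Rabs_triang.
  rewrite !Rabs_mult.
  pose proof (Rabs_pos (a - a0)); pose proof (Rabs_pos (b - b0)); pose proof (Rabs_pos a0); pose proof (Rabs_pos b0).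
  unfold k in *. nra.
Qed.

Lemma jc2_mult A B p s : jc2 A p s -> jc2 B p s -> jc2 (fun q u => A q u * B q u) p s.
Proof.
  intros HA HB eps Heps.
  set (m := Rmin 1 (eps / (Rabs (A p s) + Rabs (B p s) + 1))).
  assert (Hm : 0 < m). { unfold m; apply Rmin_glb_lt; [lra|]. apply Rdiv_lt_0_compat; auto.
    pose proof (Rabs_pos (A p s)); pose proof (Rabs_pos (B p s)); lra. }
  destruct (HA m Hm) as [d1 [Hd1 H1]]. destruct (HB m Hm) as [d2 [Hd2 H2]].
  exists (Rmin d1 d2); split. apply Rmin_glb_lt; auto.
  intros q u Hq Hu. pose proof (Rmin_l d1 d2); pose proof (Rmin_r d1 d2).
  apply mult_est; auto. apply H1; lra. apply H2; lra.
Qed.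

Lemma jc2_const c p s : jc2 (fun _ _ => c) p s.
Proof. apply jc2_fst. apply continuity_const. intros ? ?; auto. Qed.

Lemma jc2_id2 p s : jc2 (fun _ u => u) p s.
Proof. apply jc2_snd. apply derivable_continuous_pt. apply derivable_pt_id. Qed.

Lemma setc_same {n} (x : Rn n) i : setc x i (x i) = x.
Proof. apply functional_extensionality; intro j. unfold setc. destruct Fin.eq_dec; subst; auto. Qed.

Lemma setc_setc {n} (x : Rn n) i a b : setc (setc x i a) i b = setc x i b.
Proof. apply functional_extensionality; intro j. unfold setc. destruct Fin.eq_dec; auto. Qed.

Lemma setc_at {n} (x : Rn n) i a : setc x i a i = a.
Proof. unfold setc. destruct Fin.eq_dec; congruence. Qed.

Lemma setc_dist {n} (x : Rn n) i a b j : Rabs (setc x i a j - setc x i b j) <= Rabs (a - b).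
Proof. unfold setc. destruct Fin.eq_dec. lra. rewrite Rminus_diag, Rabs_R0; apply Rabs_pos. Qed.

Lemma jc2_W {n} (W : Rn n -> R -> R) x i A p s : jcont W -> jc2 A p s ->
  jc2 (fun q u => W (setc x i q) (A q u)) p s.
Proof.
  intros HW HA eps Heps. destruct (HW (setc x i p) (A p s) eps Heps) as [d1 [Hd1 H1]].
  destruct (HA d1 Hd1) as [d2 [Hd2 H2]].
  exists (Rmin d1 d2); split. apply Rmin_glb_lt; auto.
  intros q u Hq Hu. pose proof (Rmin_l d1 d2); pose proof (Rmin_r d1 d2).
  apply H1. intro j. eapply Rle_lt_trans. apply setc_dist. lra. apply H2; lra.
Qed.

Lemma deriv_setc {n} (W D : Rn n -> R -> R) x i q r :
  (forall X r, derivable_pt_lim (fun s => W (setc X i s) r) (X i) (D X r)) ->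
  derivable_pt_lim (fun s => W (setc x i s) r) q (D (setc x i q) r).
Proof.
  intros H. pose proof (H (setc x i q) r) as H'. rewrite setc_at in H'.
  replace (fun s => W (setc x i s) r) with (fun s => W (setc (setc x i q) i s) r); auto.
  apply functional_extensionality; intro s; rewrite setc_setc; auto.
Qed.

Lemma dconv f x l l' : derivable_pt_lim f x l -> l = l' -> derivable_pt_lim f x l'.
Proof. intros; subst; auto. Qed.

Lemma dchain g g' h h' q : derivable_pt_lim h q h' -> derivable_pt_lim g (h q) g' ->
  derivable_pt_lim (fun q => g (h q)) q (g' * h').
Proof. intros H1 H2. exact (derivable_pt_lim_comp h g q h' g' H1 H2). Qed.

Lemma dmul f g q a b : derivable_pt_lim f q a -> derivable_pt_lim g q b ->
  derivable_pt_lim (fun q => f q * g q) q (a * g q + f q * b).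
Proof. intros H1 H2. exact (derivable_pt_lim_mult f g q a b H1 H2). Qed.

Lemma dplus f g q a b : derivable_pt_lim f q a -> derivable_pt_lim g q b ->
  derivable_pt_lim (fun q => f q + g q) q (a + b).
Proof. intros H1 H2. exact (derivable_pt_lim_plus f g q a b H1 H2). Qed.

Lemma dconst c q : derivable_pt_lim (fun _ => c) q 0.
Proof. exact (derivable_pt_lim_const c q). Qed.

Lemma did q : derivable_pt_lim (fun q => q) q 1.
Proof. exact (derivable_pt_lim_id q). Qed.

Lemma dmulc f q a c : derivable_pt_lim f q a -> derivable_pt_lim (fun q => f q * c) q (a * c).
Proof. intro H. eapply dconv. apply dmul; [exact H| apply dconst]. cbv beta; ring. Qed.

Lemma dcmul f q a c : derivable_pt_lim f q a -> derivable_pt_lim (fun q => c * f q) q (c * a).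
Proof. intro H. eapply dconv. apply dmul; [apply dconst|exact H]. cbv beta; ring. Qed.

Definition tau t := 3 * Rpower t (1/3).
Definition tau1 t := 3 * (1/3 * Rpower t (1/3 - 1)).
Definition tau2 t := 3 * (1/3 * ((1/3 - 1) * Rpower t (1/3 - 1 - 1))).

Lemma dtau q : 0 < q -> derivable_pt_lim tau q (tau1 q).
Proof. intro. unfold tau, tau1. apply dcmul. apply derivable_pt_lim_power; auto. Qed.

Lemma dtau1 q : 0 < q -> derivable_pt_lim tau1 q (tau2 q).
Proof. intro. unfold tau1, tau2. apply dcmul. apply dcmul. apply derivable_pt_lim_power; auto. Qed.

Lemma dtaus q s : 0 < q -> derivable_pt_lim (fun q => tau q * s) q (tau1 q * s).
Proof. intro. apply dmulc. apply dtau; auto. Qed.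

Lemma dtau1s q s : 0 < q -> derivable_pt_lim (fun q => tau1 q * s) q (tau2 q * s).
Proof. intro. apply dmulc. apply dtau1; auto. Qed.

Lemma ctau q : 0 < q -> continuity_pt tau q.
Proof. intro. apply derivable_continuous_pt. exists (tau1 q). apply dtau; auto. Qed.
Lemma ctau1 q : 0 < q -> continuity_pt tau1 q.
Proof. intro. apply derivable_continuous_pt. exists (tau2 q). apply dtau1; auto. Qed.
Lemma ctau2 q : 0 < q -> continuity_pt tau2 q.
Proof. intro. apply derivable_continuous_pt. unfold tau2. exists (3 * (1/3 * ((1/3 - 1) * ((1/3-1-1) * Rpower q (1/3 - 1 - 1 - 1))))).
  apply dcmul. apply dcmul. apply dcmul. apply derivable_pt_lim_power; auto. Qed.

Lemma cpoly s : continuity_pt (fun u => 1 - u ^ 2) s.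
Proof. apply derivable_continuous_pt. exists (0 - 2 * s).
  eapply dconv. apply (derivable_pt_lim_minus (fun _ => 1) (fun u => u ^ 2)). apply dconst.
  apply derivable_pt_lim_pow. simpl; ring. Qed.

Lemma jcont_pt {n} (W : Rn n -> R -> R) x r : jcont W -> continuity_pt (W x) r.
Proof.
  intros H eps Heps. destruct (H x r eps Heps) as [d [Hd Hx]].
  exists d; split; auto. intros q [_ Hq]. simpl in *. unfold R_dist in *.
  apply Hx; auto. intro j; rewrite Rminus_diag, Rabs_R0; auto.
Qed.

Lemma jc2_v {n} (W : Rn n -> R -> R) x A p s : jcont W -> jc2 A p s -> jc2 (fun q u => W x (A q u)) p s.
Proof. intros. apply (jc2_comp (W x)); auto. apply jcont_pt; auto. Qed.

Lemma jc2_poly p s : jc2 (fun _ u => 1 - u ^ 2) p s.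
Proof. apply jc2_snd, cpoly. Qed.

Lemma wave_data {n} (phi : Rn n -> R) v : is_wave_solution phi v ->
  exists (vr vrr : Rn n -> R -> R) (d1 d2 : Fin.t n -> Rn n -> R -> R),
    (forall x r,
       derivable_pt_lim (fun q => v x q) r (vr x r) /\
       derivable_pt_lim (fun q => vr x q) r (vrr x r) /\
       (forall i,
          derivable_pt_lim (fun s => v (setc x i s) r) (x i) (d1 i x r) /\
          derivable_pt_lim (fun s => d1 i (setc x i s) r) (x i) (d2 i x r)) /\
       vrr x r - fsum n (fun i => d2 i x r) = 0) /\
    (forall x, vr x 0 = 0) /\ (forall x, v x 0 = phi x) /\
    jcont v /\ jcont vr /\ jcont vrr /\ (forall i, jcont (d1 i)) /\ (forall i, jcont (d2 i)).
Proof.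
  intros [[Jv [[Gr [HGr [JGr [[Hr [HHr [JHr _]]] _]]]] HGi]] [Hphi [vr [vrr [d1 [d2 [Hw Hvr0]]]]]]].
  exists vr, vrr, d1, d2. split; auto. split; auto. split; auto. split; auto.
  assert (Evr : vr = Gr).
  { apply functional_extensionality; intro x; apply functional_extensionality; intro r.
    eapply uniqueness_limite. apply (Hw x r). apply HGr. }
  subst Gr.
  assert (Evrr : vrr = Hr).
  { apply functional_extensionality; intro x; apply functional_extensionality; intro r.
    eapply uniqueness_limite. apply (Hw x r). apply HHr. }
  subst Hr. split; auto. split; auto. split.
  - intro i. destruct (HGi i) as [Gi [HGi' [JGi _]]].
    replace (d1 i) with Gi; auto.
    apply functional_extensionality; intro x; apply functional_extensionality; intro r.
    eapply uniqueness_limite. apply HGi'. apply (Hw x r).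
  - intro i. destruct (HGi i) as [Gi [HGi' [JGi [_ HHi]]]].
    assert (E1 : d1 i = Gi).
    { apply functional_extensionality; intro x; apply functional_extensionality; intro r.
      eapply uniqueness_limite. apply (Hw x r). apply HGi'. }
    destruct (HHi i) as [Hii [HHii [JHii _]]].
    replace (d2 i) with Hii; auto.
    apply functional_extensionality; intro x; apply functional_extensionality; intro r.
    eapply uniqueness_limite. apply HHii. rewrite <- E1. apply (Hw x r).
Qed.

Definition Fpsi {n} (v : Rn n -> R -> R) x t s := v x (tau t * s) * (1 - s ^ 2).
Definition Gt {n} (vr : Rn n -> R -> R) x t s := vr x (tau t * s) * (tau1 t * s) * (1 - s ^ 2).
Definition Gtt {n} (vr vrr : Rn n -> R -> R) x t s :=
  (vrr x (tau t * s) * (tau1 t * s) * (tau1 t * s) + vr x (tau t * s) * (tau2 t * s)) * (1 - s ^ 2).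

Lemma jc_F {n} (v : Rn n -> R -> R) x q s : jcont v -> 0 < q -> jc2 (Fpsi v x) q s.
Proof. intros. unfold Fpsi. apply jc2_mult; [|apply jc2_poly].
  apply jc2_v; auto. apply jc2_mult; [apply jc2_fst, ctau; auto|apply jc2_id2]. Qed.

Lemma jc_Gt {n} (vr : Rn n -> R -> R) x q s : jcont vr -> 0 < q -> jc2 (Gt vr x) q s.
Proof. intros. unfold Gt. apply jc2_mult; [|apply jc2_poly]. apply jc2_mult.
  apply jc2_v; auto. apply jc2_mult; [apply jc2_fst, ctau; auto|apply jc2_id2].
  apply jc2_mult; [apply jc2_fst, ctau1; auto|apply jc2_id2]. Qed.

Lemma jc_Gtt {n} (vr vrr : Rn n -> R -> R) x q s : jcont vr -> jcont vrr -> 0 < q -> jc2 (Gtt vr vrr x) q s.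
Proof. intros. unfold Gtt.
  assert (Ht : jc2 (fun q u => tau q * u) q s) by (apply jc2_mult; [apply jc2_fst, ctau; auto|apply jc2_id2]).
  assert (Ht1 : jc2 (fun q u => tau1 q * u) q s) by (apply jc2_mult; [apply jc2_fst, ctau1; auto|apply jc2_id2]).
  assert (Ht2 : jc2 (fun q u => tau2 q * u) q s) by (apply jc2_mult; [apply jc2_fst, ctau2; auto|apply jc2_id2]).
  apply jc2_mult; [|apply jc2_poly]. apply jc2_plus.
  - apply jc2_mult; auto. apply jc2_mult; auto. apply jc2_v; auto.
  - apply jc2_mult; auto. apply jc2_v; auto.
Qed.

Lemma dF_t {n} (v vr : Rn n -> R -> R) x t :
  (forall x r, derivable_pt_lim (fun q => v x q) r (vr x r)) -> jcont v -> jcont vr -> 0 < t ->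
  derivable_pt_lim (fun q => RI (Fpsi v x q)) t (RI (Gt vr x t)).
Proof.
  intros Hd Jv Jvr Ht. apply (DUI _ _ t t); auto.
  - intros q s Hq Hs. assert (0 < q) by (apply Rabs_def2 in Hq; lra).
    unfold Fpsi, Gt. apply dmulc. apply dchain. apply dtaus; auto. apply Hd.
  - intros q Hq. assert (0 < q) by (apply Rabs_def2 in Hq; lra).
    apply jc2_cont. intro s; apply jc_F; auto.
  - apply jc2_cont. intro s; apply jc_Gt; auto.
  - intros; apply jc_Gt; auto.
Qed.

Lemma dGt_t {n} (vr vrr : Rn n -> R -> R) x t :
  (forall x r, derivable_pt_lim (fun q => vr x q) r (vrr x r)) -> jcont vr -> jcont vrr -> 0 < t ->
  derivable_pt_lim (fun q => RI (Gt vr x q)) t (RI (Gtt vr vrr x t)).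
Proof.
  intros Hd Jv Jvr Ht. apply (DUI _ _ t t); auto.
  - intros q s Hq Hs. assert (0 < q) by (apply Rabs_def2 in Hq; lra).
    unfold Gtt, Gt. apply dmulc. apply (dmul (fun q => vr x (tau q * s)) (fun q => tau1 q * s)). apply (dchain (vr x) _ (fun q => tau q * s)). apply dtaus; auto. apply Hd.
    apply dtau1s; auto.
  - intros q Hq. assert (0 < q) by (apply Rabs_def2 in Hq; lra).
    apply jc2_cont. intro s; apply jc_Gt; auto.
  - apply jc2_cont. intro s; apply jc_Gtt; auto.
  - intros; apply jc_Gtt; auto.
Qed.

Lemma jc_Wx {n} (W : Rn n -> R -> R) x i T p s : jcont W ->
  jc2 (fun y u => W (setc x i y) (T * u) * (1 - u ^ 2)) p s.
Proof. intros. apply jc2_mult; [|apply jc2_poly]. apply (jc2_W W x i (fun _ u => T * u)); auto.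
  apply jc2_mult; [apply jc2_const|apply jc2_id2]. Qed.

Lemma dx_int {n} (W Dw : Rn n -> R -> R) x i T : jcont W -> jcont Dw ->
  (forall X r, derivable_pt_lim (fun s => W (setc X i s) r) (X i) (Dw X r)) ->
  derivable_pt_lim (fun y => RI (fun s => W (setc x i y) (T * s) * (1 - s ^ 2))) (x i)
    (RI (fun s => Dw x (T * s) * (1 - s ^ 2))).
Proof.
  intros JW JD Hd.
  replace (fun s => Dw x (T * s) * (1 - s ^ 2)) with (fun s => Dw (setc x i (x i)) (T * s) * (1 - s ^ 2))
    by (rewrite setc_same; auto).
  apply (DUI (fun y s => W (setc x i y) (T * s) * (1 - s ^ 2)) (fun y s => Dw (setc x i y) (T * s) * (1 - s ^ 2)) (x i) 1).
  - lra.
  - intros q s _ _. apply dmulc. apply (deriv_setc W Dw x i q (T * s)); auto.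
  - intros q _. apply (jc2_cont (fun y s => W (setc x i y) (T * s) * (1 - s ^ 2)) q). intro s. apply jc_Wx; auto.
  - apply (jc2_cont (fun y s => Dw (setc x i y) (T * s) * (1 - s ^ 2)) (x i)). intro s. apply (jc_Wx Dw x i T (x i) s); auto.
  - intros s _. apply (jc_Wx Dw x i T (x i) s); auto.
Qed.

Lemma fsum_ext n (f g : Fin.t n -> R) : (forall i, f i = g i) -> fsum n f = fsum n g.
Proof. intro H. replace f with g; auto. apply functional_extensionality; intro; auto. Qed.

Lemma fsum_int n (f : Fin.t n -> R -> R) : (forall i, Riemann_integrable (f i) 0 1) ->
  Riemann_integrable (fun s => fsum n (fun i => f i s)) 0 1.
Proof.
  induction n; intros H; simpl.
  - apply RiemannInt_P14.
  - apply (int_ext (fun s => f Fin.F1 s + 1 * fsum n (fun i => f (Fin.FS i) s))); [intros; ring|].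
    apply int_lin; auto; try apply (IHn (fun i => f (Fin.FS i))); auto.
Qed.

Lemma fsum_RI n (f : Fin.t n -> R -> R) : (forall i, Riemann_integrable (f i) 0 1) ->
  fsum n (fun i => RI (f i)) = RI (fun s => fsum n (fun i => f i s)).
Proof.
  induction n; intros H; simpl.
  - rewrite RI_const; auto.
  - rewrite (IHn (fun i => f (Fin.FS i))) by auto.
    assert (Hi : Riemann_integrable (fun s => fsum n (fun i => f (Fin.FS i) s)) 0 1)
      by (apply (fsum_int n (fun i => f (Fin.FS i))); auto).
    replace (RI (fun s => f Fin.F1 s + fsum n (fun i => f (Fin.FS i) s)))
      with (RI (fun s => f Fin.F1 s + 1 * fsum n (fun i => f (Fin.FS i) s))).
    + rewrite RI_lin; auto. ring.
    + apply RI_ext. apply int_lin; auto. intros; ring.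
Qed.

Lemma fsum_mulr n (f : Fin.t n -> R) c : fsum n (fun i => f i * c) = fsum n f * c.
Proof. induction n; simpl. ring. rewrite (IHn (fun i => f (Fin.FS i))). ring. Qed.

Lemma fsum_mull n (f : Fin.t n -> R) c : fsum n (fun i => c * f i) = c * fsum n f.
Proof. induction n; simpl. ring. rewrite (IHn (fun i => f (Fin.FS i))). ring. Qed.

Lemma u_pos t : 0 < Rpower t (1/3).
Proof. unfold Rpower; apply exp_pos. Qed.

Lemma u_pow t m : 0 < t -> Rpower t (1/3) ^ m = Rpower t (1/3 * INR m).
Proof. intro Ht. rewrite <- Rpower_pow by apply u_pos. rewrite Rpower_mult. auto. Qed.

Lemma rp_inv t a m : 0 < t -> a + 1/3 * INR m = 0 -> Rpower t a * Rpower t (1/3) ^ m = 1.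
Proof. intros Ht H. rewrite u_pow by auto. rewrite <- Rpower_plus, H. apply Rpower_O; auto. Qed.

Lemma t_u3 t : 0 < t -> t = Rpower t (1/3) ^ 3.
Proof. intro Ht. rewrite u_pow by auto. replace (1/3 * INR 3) with 1 by (simpl; field). rewrite Rpower_1; auto. Qed.

Lemma small_u t eta : 0 < t -> 0 < eta -> t < eta ^ 3 -> Rpower t (1/3) < eta.
Proof.
  intros Ht He Hlt. destruct (Rlt_le_dec (Rpower t (1/3)) eta); auto.
  exfalso. pose proof (pow_incr eta (Rpower t (1/3)) 3 (conj (Rlt_le _ _ He) r)).
  rewrite <- t_u3 in H; auto. lra.
Qed.

Lemma cont_ball f a : continuity_pt f a -> forall eps, 0 < eps -> exists d, 0 < d /\
  forall y, Rabs (y - a) < d -> Rabs (f y - f a) < eps.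
Proof.
  intros H eps He. destruct (H eps He) as [d [Hd Hx]]. exists d; split; auto.
  intros y Hy. destruct (Req_dec y a). subst; rewrite Rminus_diag, Rabs_R0; auto.
  apply (Hx y). split; auto. split; auto. exact I.
Qed.

Lemma RI_poly : RI (fun s => 1 - s ^ 2) = 2/3.
Proof.
  rewrite (RI_FTC (fun s => s - s ^ 3 / 3)).
  - simpl; field.
  - intro s. eapply dconv. apply (derivable_pt_lim_minus (fun s => s) (fun s => s ^ 3 / 3)).
    apply did. unfold Rdiv. apply dmulc. apply derivable_pt_lim_pow. simpl; field.
  - intro s; apply cpoly.
Qed.

Lemma cont_jc f : (forall s, jc2 (fun _ u => f u) 0 s) -> continuity f.
Proof. intro H. exact (jc2_cont (fun _ u => f u) 0 H). Qed.

Lemma jc_Tv {n} (W : Rn n -> R -> R) x T p s : jcont W -> jc2 (fun _ u => W x (T * u)) p s.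
Proof. intro. apply jc2_v; auto. apply jc2_mult; [apply jc2_const|apply jc2_id2]. Qed.

Lemma ibp {n} (vr vrr : Rn n -> R -> R) x T :
  (forall x r, derivable_pt_lim (fun q => vr x q) r (vrr x r)) -> jcont vr -> jcont vrr -> vr x 0 = 0 ->
  -4 * RI (fun s => vr x (T * s) * s * (1 - s ^ 2))
  + T * (RI (fun s => vrr x (T * s) * (1 - s ^ 2)) - RI (fun s => vrr x (T * s) * s * s * (1 - s ^ 2))) = 0.
Proof.
  intros Hd Jr Jrr H0.
  assert (c1 : continuity (fun s => vr x (T * s) * s * (1 - s ^ 2))).
  { apply cont_jc; intro s. apply jc2_mult; [|apply jc2_poly]. apply jc2_mult; [|apply jc2_id2]. apply jc_Tv; auto. }
  assert (c2 : continuity (fun s => vrr x (T * s) * (1 - s ^ 2))).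
  { apply cont_jc; intro s. apply jc2_mult; [|apply jc2_poly]. apply jc_Tv; auto. }
  assert (c3 : continuity (fun s => vrr x (T * s) * s * s * (1 - s ^ 2))).
  { apply cont_jc; intro s. apply jc2_mult; [|apply jc2_poly]. apply jc2_mult; [|apply jc2_id2].
    apply jc2_mult; [|apply jc2_id2]. apply jc_Tv; auto. }
  pose proof (int_cont _ c1) as i1. pose proof (int_cont _ c2) as i2. pose proof (int_cont _ c3) as i3.
  set (K1 := fun s => vr x (T * s) * s * (1 - s ^ 2)) in *.
  set (K2 := fun s => vrr x (T * s) * (1 - s ^ 2)) in *.
  set (K3 := fun s => vrr x (T * s) * s * s * (1 - s ^ 2)) in *.
  assert (E1 : RI (fun s => (fun s => -4 * K1 s) s + T * (fun s => K2 s - K3 s) s)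
     = -4 * RI K1 + T * (RI K2 - RI K3)).
  { rewrite RI_lin. rewrite RI_scal by auto. rewrite RI_minus by auto. ring.
    apply int_scal; auto. apply int_minus; auto. }
  rewrite <- E1.
  rewrite (RI_ext _ (fun s => (-4 * s * (1 - s ^ 2)) * vr x (T * s) + ((1 - s ^ 2) * (1 - s ^ 2)) * (vrr x (T * s) * (T * 1)))).
  2: { apply int_lin; [apply int_scal; auto| apply int_minus; auto]. }
  2: { intros; unfold K1, K2, K3; ring. }
  rewrite (RI_FTC (fun s => ((1 - s ^ 2) * (1 - s ^ 2)) * vr x (T * s))).
  - replace (T * 1) with T by ring. replace (T * 0) with 0 by ring. rewrite H0. simpl; ring.
  - intro s. eapply dconv. apply dmul.
    + apply dmul; apply (derivable_pt_lim_minus (fun _ => 1) (fun u => u ^ 2)); [apply dconst| apply derivable_pt_lim_pow| apply dconst| apply derivable_pt_lim_pow].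
    + apply (dchain (vr x) (vrr x (T * s)) (fun s => T * s) (T * 1)). apply dcmul, did. apply Hd.
    + simpl. ring.
  - apply cont_jc; intro s. apply jc2_plus.
    + apply jc2_mult; [|apply jc_Tv; auto]. apply jc2_snd. apply derivable_continuous_pt.
      exists (-4 * 1 * (1 - s^2) + -4 * s * (0 - INR 2 * s ^ 1)). apply (dmul (fun u => -4 * u) (fun u => 1 - u ^ 2)). apply dcmul, did.
      apply (derivable_pt_lim_minus (fun _ => 1) (fun u => u ^ 2)); [apply dconst| apply derivable_pt_lim_pow].
    + apply jc2_mult. apply jc2_mult; apply jc2_poly. apply jc2_mult. apply jc_Tv; auto. apply jc2_const.
Qed.

Lemma alg u A B P I1 I2 I3 : 0 < u -> A * u ^ 2 = 1 -> B * u ^ 5 = 1 -> P * u ^ 4 = 1 ->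
  -4 * I1 + 3 * u * (I2 - I3) = 0 ->
  3/2 * ((3 * (1/3 * A)) * (3 * (1/3 * A)) * I3 + 3 * (1/3 * ((1/3 - 1) * B)) * I1)
  - P * (3/2 * I2) + 2 / (u ^ 3) * (3/2 * (3 * (1/3 * A) * I1)) = 0.
Proof.
  intros Hu HA HB HP HI.
  assert (u <> 0) by lra.
  assert (EA : A = / u ^ 2) by (rewrite <- (Rmult_1_l (/ u ^ 2)), <- HA; field; auto).
  assert (EB : B = / u ^ 5) by (rewrite <- (Rmult_1_l (/ u ^ 5)), <- HB; field; auto).
  assert (EP : P = / u ^ 4) by (rewrite <- (Rmult_1_l (/ u ^ 4)), <- HP; field; auto).
  assert (EI : I3 = I2 - 4 * I1 / (3 * u)) by (field_simplify_eq; [lra|auto]).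
  subst A B P. rewrite EI. field. auto.
Qed.

Lemma deriv_loc f g t r l : 0 < r -> (forall y, Rabs (y - t) < r -> f y = g y) ->
  derivable_pt_lim g t l -> derivable_pt_lim f t l.
Proof.
  intros Hr He Hg eps Heps. destruct (Hg eps Heps) as [d Hd].
  assert (Hm : 0 < Rmin d r) by (apply Rmin_glb_lt; auto; apply cond_pos).
  exists (mkposreal _ Hm). simpl; intros h Hh0 Hh.
  pose proof (Rmin_l d r); pose proof (Rmin_r d r).
  rewrite !He. apply Hd; auto; lra.
  rewrite Rminus_diag, Rabs_R0; auto. replace (t + h - t) with h by ring; lra.
Qed.

Lemma bound_prod A M s : Rabs A <= M -> 0 <= s <= 1 -> Rabs (A * (1 - s ^ 2)) <= M.
Proof.
  intros H Hs. rewrite Rabs_mult.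
  assert (Rabs (1 - s ^ 2) <= 1) by (rewrite Rabs_right; simpl; nra).
  pose proof (Rabs_pos A); pose proof (Rabs_pos (1 - s ^ 2)). nra.
Qed.

Lemma Ts_small t s d : 0 < t -> 0 <= s <= 1 -> Rpower t (1/3) < d / 3 -> Rabs (tau t * s - 0) < d.
Proof.
  intros Ht Hs Hu. unfold tau. pose proof (u_pos t).
  rewrite Rminus_0_r, Rabs_right by nra. nra.
Qed.

Theorem corollary2p6 (n : nat) (phi1 : Rn n -> R) (v : Rn n -> R -> R)
  (psi : Rn n -> R -> R) :
  C0k (Nat.div n 2 + 2) phi1 ->
  is_wave_solution phi1 v ->
  (forall x t, 0 < t ->
     exists pr : Riemann_integrable
                   (fun s => v x (3 * Rpower t (1/3) * s) * (1 - s ^ 2)) 0 1,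
       psi x t = 3 / 2 * RiemannInt pr) ->
  exists (psit psitt : Rn n -> R -> R) (d1 d2 : Fin.t n -> Rn n -> R -> R),
    (forall x t, 0 < t ->
       derivable_pt_lim (fun s => psi x s) t (psit x t) /\
       derivable_pt_lim (fun s => psit x s) t (psitt x t) /\
       (forall i,
          derivable_pt_lim (fun s => psi (setc x i s) t) (x i) (d1 i x t) /\
          derivable_pt_lim (fun s => d1 i (setc x i s) t) (x i) (d2 i x t)) /\
       psitt x t - Rpower t (-4/3) * fsum n (fun i => d2 i x t)
         + 2 / t * psit x t = 0) /\
    (forall x, limit1_in (fun t => t * psi x t) (fun t => 0 < t) 0 0) /\
    (forall x, limit1_in (fun t => t * psit x t + psi x t) (fun t => 0 < t)
                 (phi1 x) 0).
Proof.
  intros _ Hw Hpsi.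
  destruct (wave_data _ _ Hw) as [vr [vrr [d1 [d2 [Hder [Hvr0 [Hv0 [Jv [Jvr [Jvrr [Jd1 Jd2]]]]]]]]]]].
  assert (Dv : forall x r, derivable_pt_lim (fun q => v x q) r (vr x r)) by (intros; apply Hder).
  assert (Dvr : forall x r, derivable_pt_lim (fun q => vr x q) r (vrr x r)) by (intros; apply Hder).
  assert (Dx1 : forall i X r, derivable_pt_lim (fun s => v (setc X i s) r) (X i) (d1 i X r))
    by (intros; apply Hder).
  assert (Dx2 : forall i X r, derivable_pt_lim (fun s => d1 i (setc X i s) r) (X i) (d2 i X r))
    by (intros; apply Hder).
  assert (Hpe : forall x t, 0 < t -> psi x t = 3/2 * RI (Fpsi v x t)).
  { intros x t Ht. destruct (Hpsi x t Ht) as [pr E]. rewrite E. unfold Fpsi, tau.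
    rewrite (RI_pr _ pr). reflexivity. }
  exists (fun x t => 3/2 * RI (Gt vr x t)), (fun x t => 3/2 * RI (Gtt vr vrr x t)),
    (fun i x t => 3/2 * RI (fun s => d1 i x (tau t * s) * (1 - s ^ 2))),
    (fun i x t => 3/2 * RI (fun s => d2 i x (tau t * s) * (1 - s ^ 2))).
  split; [|split].
  - intros x t Ht. split; [|split; [|split]].
    + apply (deriv_loc _ (fun s => 3/2 * RI (Fpsi v x s)) t t); auto.
      * intros y Hy. apply Hpe. apply Rabs_def2 in Hy; lra.
      * apply dcmul. apply dF_t; auto.
    + apply dcmul. apply dGt_t; auto.
    + intro i. split.
      * replace (fun s => psi (setc x i s) t) with (fun y => 3/2 * RI (fun s => v (setc x i y) (tau t * s) * (1 - s ^ 2))).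
        apply dcmul. apply dx_int; auto.
        apply functional_extensionality; intro y. rewrite Hpe; auto.
      * cbv beta. apply dcmul. apply dx_int; auto.
    + assert (cK1 : continuity (fun s => vr x (tau t * s) * s * (1 - s ^ 2))).
      { apply cont_jc; intro s. apply jc2_mult; [|apply jc2_poly]. apply jc2_mult; [|apply jc2_id2]. apply jc_Tv; auto. }
      assert (cK2 : continuity (fun s => vrr x (tau t * s) * (1 - s ^ 2))).
      { apply cont_jc; intro s. apply jc2_mult; [|apply jc2_poly]. apply jc_Tv; auto. }
      assert (cK3 : continuity (fun s => vrr x (tau t * s) * s * s * (1 - s ^ 2))).
      { apply cont_jc; intro s. apply jc2_mult; [|apply jc2_poly]. apply jc2_mult; [|apply jc2_id2].
        apply jc2_mult; [|apply jc2_id2]. apply jc_Tv; auto. }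
      pose proof (int_cont _ cK1) as i1. pose proof (int_cont _ cK2) as i2. pose proof (int_cont _ cK3) as i3.
      assert (E1 : RI (Gtt vr vrr x t) = (tau1 t * tau1 t) * RI (fun s => vrr x (tau t * s) * s * s * (1 - s ^ 2))
                     + tau2 t * RI (fun s => vr x (tau t * s) * s * (1 - s ^ 2))).
      { rewrite <- RI_scal by auto. rewrite <- RI_lin by (try apply int_scal; auto).
        apply RI_ext. apply int_cont. apply jc2_cont. intro s; apply jc_Gtt; auto.
        intros; unfold Gtt; ring. }
      assert (E2 : RI (Gt vr x t) = tau1 t * RI (fun s => vr x (tau t * s) * s * (1 - s ^ 2))).
      { rewrite <- RI_scal by auto.
        apply RI_ext. apply int_cont. apply jc2_cont. intro s; apply jc_Gt; auto.
        intros; unfold Gt; ring. }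
      assert (E3 : fsum n (fun i => 3/2 * RI (fun s => d2 i x (tau t * s) * (1 - s ^ 2)))
                   = 3/2 * RI (fun s => vrr x (tau t * s) * (1 - s ^ 2))).
      { rewrite fsum_mull. f_equal.
        rewrite (fsum_RI n (fun i s => d2 i x (tau t * s) * (1 - s ^ 2))).
        - apply RI_ext. apply fsum_int. intro i. apply int_cont. apply cont_jc; intro s.
          apply jc2_mult; [|apply jc2_poly]. apply jc_Tv; auto.
          intros s _. rewrite fsum_mulr. f_equal.
          destruct (Hder x (tau t * s)) as [_ [_ [_ Hweq]]]. lra.
        - intro i. apply int_cont. apply cont_jc; intro s.
          apply jc2_mult; [|apply jc2_poly]. apply jc_Tv; auto. }
      rewrite E1, E2, E3.
      pose proof (ibp vr vrr x (tau t) Dvr Jvr Jvrr (Hvr0 x)) as Hibp.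
      replace (2 / t) with (2 / (Rpower t (1/3)) ^ 3) by (rewrite <- t_u3; auto).
      unfold tau1, tau2. unfold tau in Hibp.
      apply alg; auto. apply u_pos.
      apply rp_inv; auto. simpl; lra.
      apply rp_inv; auto. simpl; lra.
      apply rp_inv; auto. simpl; lra.
  - intros x eps Heps. simpl. unfold R_dist.
    destruct (cont_ball (v x) 0 (jcont_pt v x 0 Jv) 1) as [dv [Hdv Hv]]; [lra|].
    set (K := 3/2 * (Rabs (phi1 x) + 1)).
    assert (HK : 0 < K) by (unfold K; pose proof (Rabs_pos (phi1 x)); lra).
    assert (Ha : 0 < Rmin ((dv/3)^3) (eps / (K + 1))).
    { apply Rmin_glb_lt. apply pow_lt; lra. apply Rdiv_lt_0_compat; lra. }
    exists (Rmin ((dv/3)^3) (eps / (K + 1))). split; [lra|].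
    intros t [Ht Hta]. rewrite Rminus_0_r, Rabs_right in Hta by lra.
    pose proof (Rmin_l ((dv/3)^3) (eps / (K + 1))). pose proof (Rmin_r ((dv/3)^3) (eps / (K + 1))).
    assert (Hu : Rpower t (1/3) < dv / 3) by (apply small_u; lra).
    rewrite Rminus_0_r, Hpe by auto.
    assert (Hb : Rabs (RI (Fpsi v x t)) <= Rabs (phi1 x) + 1).
    { apply RI_bound. apply int_cont, jc2_cont. intro s; apply jc_F; auto.
      intros s Hs. unfold Fpsi. apply bound_prod; auto.
      pose proof (Hv _ (Ts_small t s dv Ht Hs Hu)). rewrite Hv0 in H1.
      pose proof (Rabs_triang_inv (v x (tau t * s)) (phi1 x)). lra. }
    rewrite !Rabs_mult. rewrite (Rabs_right t) by lra. rewrite (Rabs_right (3/2)) by lra.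
    assert (t * (3/2 * Rabs (RI (Fpsi v x t))) <= t * K) by (unfold K; apply Rmult_le_compat_l; lra).
    assert (t * K < eps).
    { apply Rlt_le_trans with (eps / (K + 1) * K). apply Rmult_lt_compat_r; lra.
      apply (Rmult_le_reg_r (K + 1)); [lra|]. field_simplify; [|lra]. nra. }
    lra.
  - intros x eps Heps. simpl. unfold R_dist.
    destruct (cont_ball (v x) 0 (jcont_pt v x 0 Jv) (eps/3)) as [dv [Hdv Hv]]; [lra|].
    destruct (cont_ball (vr x) 0 (jcont_pt vr x 0 Jvr) 1) as [dr [Hdr Hr]]; [lra|].
    set (al := Rmin ((dv/3)^3) (Rmin ((dr/3)^3) ((eps/3)^3))).
    assert (Ha : 0 < al).
    { unfold al; repeat apply Rmin_glb_lt; apply pow_lt; lra. }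
    exists al. split; [lra|].
    intros t [Ht Hta]. rewrite Rminus_0_r, Rabs_right in Hta by lra.
    assert (al <= (dv/3)^3) by apply Rmin_l.
    assert (al <= (dr/3)^3) by (eapply Rle_trans; [apply Rmin_r|apply Rmin_l]).
    assert (al <= (eps/3)^3) by (eapply Rle_trans; [apply Rmin_r|apply Rmin_r]).
    assert (Hu1 : Rpower t (1/3) < dv / 3) by (apply small_u; lra).
    assert (Hu2 : Rpower t (1/3) < dr / 3) by (apply small_u; lra).
    assert (Hu3 : Rpower t (1/3) < eps / 3) by (apply small_u; lra).
    rewrite Hpe by auto.
    assert (cF : continuity (Fpsi v x t)) by (apply jc2_cont; intro s; apply jc_F; auto).
    assert (cG : continuity (Gt vr x t)) by (apply jc2_cont; intro s; apply jc_Gt; auto).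
    assert (Ea : tau1 t * Rpower t (1/3) ^ 2 = 1).
    { unfold tau1. replace (3 * (1/3 * Rpower t (1/3 - 1))) with (Rpower t (1/3 - 1)) by field.
      apply rp_inv; auto. simpl; lra. }
    assert (Hapos : 0 < tau1 t).
    { unfold tau1. pose proof (u_pos (t)). unfold Rpower. pose proof (exp_pos ((1/3 - 1) * ln t)). lra. }
    assert (Hta1 : t * tau1 t = Rpower t (1/3)).
    { rewrite (t_u3 t) at 1 by auto. pose proof (u_pos t). simpl. simpl in Ea. nra. }
    assert (HbG : Rabs (RI (Gt vr x t)) <= tau1 t).
    { apply RI_bound. apply int_cont; auto.
      intros s Hs. unfold Gt. apply bound_prod; auto.
      pose proof (Hr _ (Ts_small t s dr Ht Hs Hu2)). rewrite Hvr0, Rminus_0_r in H2.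
      rewrite Rabs_mult, (Rabs_right (tau1 t * s)) by nra.
      pose proof (Rabs_pos (vr x (tau t * s))). apply Rle_trans with (1 * (tau1 t * s)); [apply Rmult_le_compat_r; nra | nra]. }
    assert (Hphi : phi1 x = 3/2 * RI (fun s => phi1 x * (1 - s ^ 2))).
    { rewrite RI_scal. rewrite RI_poly. field. apply int_cont. intro s; apply cpoly. }
    assert (ip : Riemann_integrable (fun s => phi1 x * (1 - s ^ 2)) 0 1).
    { apply int_scal. apply int_cont. intro s; apply cpoly. }
    assert (HbF : Rabs (RI (fun s => Fpsi v x t s - phi1 x * (1 - s ^ 2))) <= eps / 3).
    { apply RI_bound. apply int_minus; auto. apply int_cont; auto.
      intros s Hs. unfold Fpsi. replace (v x (tau t * s) * (1 - s ^ 2) - phi1 x * (1 - s ^ 2))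
        with ((v x (tau t * s) - phi1 x) * (1 - s ^ 2)) by ring.
      apply bound_prod; auto. pose proof (Hv _ (Ts_small t s dv Ht Hs Hu1)). rewrite Hv0 in H2. lra. }
    rewrite RI_minus in HbF by (auto; apply int_cont; auto).
    rewrite Hphi.
    replace (t * (3 / 2 * RI (Gt vr x t)) + 3 / 2 * RI (Fpsi v x t) - 3 / 2 * RI (fun s => phi1 x * (1 - s ^ 2)))
      with (3/2 * (t * RI (Gt vr x t)) + 3/2 * (RI (Fpsi v x t) - RI (fun s => phi1 x * (1 - s ^ 2)))) by ring.
    eapply Rle_lt_trans. apply Rabs_triang. rewrite !Rabs_mult, (Rabs_right (3/2)), (Rabs_right t) by lra.
    assert (t * Rabs (RI (Gt vr x t)) <= Rpower t (1/3)) by (rewrite <- Hta1; apply Rmult_le_compat_l; lra).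
    lra.
Qed.
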